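(* For every integer $t\ge 0$ there exists a finite-dimensional capable nilpotent Lie superalgebra $L$ with corank $t(L)=t$.
   Context: All algebras are over a field $\mathbb{F}$ of characteristic $\neq 2,3$. For a free presentation $0\to R\to F\to L\to 0$ ($F$ free Lie superalgebra, $R$ graded ideal), the Schur multiplier is $\mathcal{M}(L)=(R\cap F')/[R,F]$. For a nilpotent Lie superalgebra $L$ with $\dim L_{\bar0}=m$, $\dim L_{\bar1}=n$, the corank $t(L)\ge 0$ is defined by $\dim\mathcal{M}(L)=\frac12[(m+n)^2+(n-m)]-t(L)$, where $\dim\mathcal{M}(L)$ is the total dimension. A Lie superalgebra $L$ is capable if $L\cong H/Z(H)$ for some Lie superalgebra $H$. *)

(* Defs.v *)
From HB Require Import structures.
From mathcomp Require Import all_boot all_order all_algebra.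
Set Implicit Arguments. Unset Strict Implicit. Unset Printing Implicit Defensive.
Import GRing.Theory.
Local Open Scope ring_scope.

(* A Lie superalgebra over F is modelled on V0 (+) V1, i.e. on the product
   type V0 * V1 of two F-vector spaces: the even part is {(x,0)}, the odd
   part is {(0,y)}. *)

Definition homog (F : fieldType) (V0 V1 : lmodType F) (b : bool) (v : V0 * V1)
  : Prop := if b then v.1 = 0 else v.2 = 0.

Record LieSuper (F : fieldType) (V0 V1 : lmodType F) := {
  lbr : V0 * V1 -> V0 * V1 -> V0 * V1;
  lbr_linl : forall (a : F) (x y z : V0 * V1),
      lbr (a *: x + y) z = a *: lbr x z + lbr y z;
  lbr_linr : forall (a : F) (x y z : V0 * V1),
      lbr z (a *: x + y) = a *: lbr z x + lbr z y;
  lbr_graded : forall (a b : bool) (x y : V0 * V1),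
      homog a x -> homog b y -> homog (a (+) b) (lbr x y);
  lbr_anti : forall (a b : bool) (x y : V0 * V1),
      homog a x -> homog b y -> lbr x y = - (((-1) ^+ (a && b)) *: lbr y x);
  lbr_jacobi : forall (a b c : bool) (x y z : V0 * V1),
      homog a x -> homog b y -> homog c z ->
      ((-1) ^+ (a && c)) *: lbr x (lbr y z)
      + ((-1) ^+ (b && a)) *: lbr y (lbr z x)
      + ((-1) ^+ (c && b)) *: lbr z (lbr x y) = 0
}.

Arguments lbr {F V0 V1} l x y.

Definition even_hom (F : fieldType) (V0 V1 W0 W1 : lmodType F)
  (L : LieSuper V0 V1) (H : LieSuper W0 W1) (f : V0 * V1 -> W0 * W1) : Prop :=
  [/\ forall (a : F) x y, f (a *: x + y) = a *: f x + f y,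
      forall b x, homog b x -> homog b (f x)
    & forall x y, f (lbr L x y) = lbr H (f x) (f y)].

Definition brspan (F : fieldType) (V0 V1 : lmodType F) (L : LieSuper V0 V1)
  (P Q : V0 * V1 -> Prop) (x : V0 * V1) : Prop :=
  exists (k : nat) (a b : 'I_k -> V0 * V1),
    (forall i, P (a i) /\ Q (b i)) /\ x = \sum_(i < k) lbr L (a i) (b i).

(* dim (A / B) = d, for subspaces B <= A of an arbitrary F-vector space. *)
Definition qdim (F : fieldType) (V : lmodType F) (A B : V -> Prop) (d : nat)
  : Prop :=
  exists s : 'I_d -> V,
    [/\ forall i, A (s i),
        forall a, A a -> exists c : 'I_d -> F, B (a - \sum_(i < d) c i *: s i)
      & forall c : 'I_d -> F, B (\sum_(i < d) c i *: s i) -> forall i, c i = 0].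

Definition is_free (F : fieldType) (V0 V1 : lmodType F) (Fr : LieSuper V0 V1)
  (X0 X1 : Type) (i0 : X0 -> V0) (i1 : X1 -> V1) : Prop :=
  forall (W0 W1 : lmodType F) (H : LieSuper W0 W1) (g0 : X0 -> W0)
         (g1 : X1 -> W1),
    (exists f, [/\ even_hom Fr H f,
                   forall x, f (i0 x, 0) = (g0 x, 0)
                 & forall x, f (0, i1 x) = (0, g1 x)])
    /\ (forall f f', even_hom Fr H f -> even_hom Fr H f' ->
          (forall x, f (i0 x, 0) = f' (i0 x, 0)) ->
          (forall x, f (0, i1 x) = f' (0, i1 x)) ->
          forall v, f v = f' v).

(* dim M(L) = d, where M(L) = (R cap F')/[R,F] for a free presentation
   0 -> R -> Fr -> L -> 0 (R = ker pi). *)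
Definition schur_dim (F : fieldType) (V0 V1 : lmodType F) (L : LieSuper V0 V1)
  (d : nat) : Prop :=
  exists (X0 X1 : Type) (U0 U1 : lmodType F) (Fr : LieSuper U0 U1)
         (i0 : X0 -> U0) (i1 : X1 -> U1) (pi : U0 * U1 -> V0 * V1),
    [/\ is_free Fr i0 i1, even_hom Fr L pi, (forall v, exists u, pi u = v)
      & let R := fun u => pi u = 0 in
        qdim (fun u => R u /\ brspan Fr (fun _ => True) (fun _ => True) u)
             (brspan Fr R (fun _ => True)) d].

(* Corank: dim M(L) = 1/2 [(m+n)^2 + (n-m)] - t, m = dim L0, n = dim L1. *)
Definition has_corank (F : fieldType) (m n : nat)
  (L : LieSuper 'rV[F]_m 'rV[F]_n) (t : nat) : Prop :=
  exists d : nat, schur_dim L d /\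
    ((2 * d)%N%:Z = ((m + n) ^ 2)%N%:Z + (n%:Z - m%:Z) - (2 * t)%N%:Z)%R.

(* Lower central series L^1 = L, L^{k+1} = [L^k, L] (indexed from 0 here). *)
Fixpoint lcs (F : fieldType) (V0 V1 : lmodType F) (L : LieSuper V0 V1)
  (k : nat) : V0 * V1 -> Prop :=
  match k with
  | O => fun _ => True
  | S k' => brspan L (lcs L k') (fun _ => True)
  end.

Definition nilpotent (F : fieldType) (V0 V1 : lmodType F) (L : LieSuper V0 V1)
  : Prop := exists k, forall x, lcs L k x -> x = 0.

Definition center (F : fieldType) (V0 V1 : lmodType F) (H : LieSuper V0 V1)
  (z : V0 * V1) : Prop := forall h, lbr H z h = 0.

Definition capable (F : fieldType) (V0 V1 : lmodType F) (L : LieSuper V0 V1)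
  : Prop :=
  exists (W0 W1 : lmodType F) (H : LieSuper W0 W1) (phi : W0 * W1 -> V0 * V1),
    [/\ even_hom H L phi, (forall v, exists w, phi w = v)
      & forall z, phi z = 0 <-> center H z].

(* Main.v *)
Require Import Defs.
From HB Require Import structures.
From mathcomp Require Import all_boot all_order all_algebra.
From mathcomp Require Import ring zify.
From Stdlib Require Import ClassicalEpsilon FunctionalExtensionality PropExtensionality.
Import GRing.Theory.
Local Open Scope ring_scope.
Set Implicit Arguments. Unset Strict Implicit. Unset Printing Implicit Defensive.

Lemma pairP (A B : Type) (p q : A * B) : p.1 = q.1 -> p.2 = q.2 -> p = q.
Proof. by case: p q => ? ? [? ?] /= -> ->. Qed.

Section LSgen.
Variable F : fieldType.

Lemma rV0 (v : 'rV[F]_0) : v = 0.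
Proof. by apply/rowP => -[]. Qed.

Section LS.
Variables (V0 V1 : lmodType F) (L : LieSuper V0 V1).

Lemma lbr0l z : lbr L 0 z = 0.
Proof.
have := lbr_linl L (-1) 0 0 z.
by rewrite scaler0 addr0 scaleN1r addNr.
Qed.
Lemma lbr0r z : lbr L z 0 = 0.
Proof.
have := lbr_linr L (-1) 0 0 z.
by rewrite scaler0 addr0 scaleN1r addNr.
Qed.
Lemma lbrDl x y z : lbr L (x + y) z = lbr L x z + lbr L y z.
Proof. by have := lbr_linl L 1 x y z; rewrite !scale1r. Qed.
Lemma lbrDr x y z : lbr L z (x + y) = lbr L z x + lbr L z y.
Proof. by have := lbr_linr L 1 x y z; rewrite !scale1r. Qed.
Lemma lbrZl a x z : lbr L (a *: x) z = a *: lbr L x z.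
Proof. by have := lbr_linl L a x 0 z; rewrite addr0 lbr0l addr0. Qed.
Lemma lbrZr a x z : lbr L z (a *: x) = a *: lbr L z x.
Proof. by have := lbr_linr L a x 0 z; rewrite addr0 lbr0r addr0. Qed.
Lemma lbrNl x z : lbr L (- x) z = - lbr L x z.
Proof. by rewrite -scaleN1r lbrZl scaleN1r. Qed.
Lemma lbrNr x z : lbr L z (- x) = - lbr L z x.
Proof. by rewrite -scaleN1r lbrZr scaleN1r. Qed.
Lemma lbrBl x y z : lbr L (x - y) z = lbr L x z - lbr L y z.
Proof. by rewrite lbrDl lbrNl. Qed.
Lemma lbrBr x y z : lbr L z (x - y) = lbr L z x - lbr L z y.
Proof. by rewrite lbrDr lbrNr. Qed.
Lemma lbr_suml (I : Type) (r : seq I) (P : pred I) (f : I -> V0 * V1) z :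
  lbr L (\sum_(i <- r | P i) f i) z = \sum_(i <- r | P i) lbr L (f i) z.
Proof.
exact: (big_morph (fun x => lbr L x z) (fun x y => lbrDl x y z) (lbr0l z)).
Qed.
Lemma lbr_sumr (I : Type) (r : seq I) (P : pred I) (f : I -> V0 * V1) z :
  lbr L z (\sum_(i <- r | P i) f i) = \sum_(i <- r | P i) lbr L z (f i).
Proof.
exact: (big_morph (fun x => lbr L z x) (fun x y => lbrDr x y z) (lbr0r z)).
Qed.
End LS.

Section Builder.
Variables (V : lmodType F) (br : V -> V -> V).
Hypotheses (brlin : forall a x y z, br (a *: x + y) z = a *: br x z + br y z)
  (branti : forall x y, br x y = - br y x)
  (brjac : forall x y z, br x (br y z) + br y (br z x) + br z (br x y) = 0).

Lemma br0l z : br 0 z = 0.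
Proof. by have := brlin (-1) 0 0 z; rewrite scaler0 addr0 scaleN1r addNr. Qed.
Lemma br0r z : br z 0 = 0.
Proof. by rewrite branti br0l oppr0. Qed.

Definition mkbr (x y : V * 'rV[F]_0) : V * 'rV[F]_0 := (br x.1 y.1, 0).

Lemma mk_linl a (x y z : V * 'rV[F]_0) :
  mkbr (a *: x + y) z = a *: mkbr x z + mkbr y z.
Proof. by apply: pairP; rewrite /= ?brlin // scaler0 addr0. Qed.
Lemma mk_linr a (x y z : V * 'rV[F]_0) :
  mkbr z (a *: x + y) = a *: mkbr z x + mkbr z y.
Proof.
apply: pairP; rewrite /= ?scaler0 ?addr0 //.
by rewrite branti brlin (branti x.1) (branti y.1) opprD scalerN !opprK.
Qed.
Lemma mk_graded (a b : bool) (x y : V * 'rV[F]_0) :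
  homog a x -> homog b y -> homog (a (+) b) (mkbr x y).
Proof.
by case: a b => [] [] /= hx hy //; rewrite ?hx ?hy ?br0l ?br0r.
Qed.
Lemma mk_anti (a b : bool) (x y : V * 'rV[F]_0) :
  homog a x -> homog b y -> mkbr x y = - (((-1) ^+ (a && b)) *: mkbr y x).
Proof.
move=> hx hy; apply: pairP; rewrite /= ?scaler0 ?oppr0 //.
case: a b hx hy => [] [] /= hx hy; rewrite ?hx ?hy ?br0l ?br0r ?scaler0 ?oppr0 //;
  by rewrite expr0 scale1r -branti.
Qed.
Lemma mk_jacobi (a b c : bool) (x y z : V * 'rV[F]_0) :
  homog a x -> homog b y -> homog c z ->
  ((-1) ^+ (a && c)) *: mkbr x (mkbr y z)
  + ((-1) ^+ (b && a)) *: mkbr y (mkbr z x)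
  + ((-1) ^+ (c && b)) *: mkbr z (mkbr x y) = 0.
Proof.
move=> hx hy hz; apply: pairP; rewrite /= ?scaler0 ?addr0 //.
case: a b c hx hy hz => [] [] [] /= hx hy hz;
  rewrite ?hx ?hy ?hz ?br0l ?br0r ?scaler0 ?addr0 ?add0r //.
by rewrite !expr0 !scale1r.
Qed.

Definition mkLie : LieSuper V 'rV[F]_0 :=
  Build_LieSuper mk_linl mk_linr mk_graded mk_anti mk_jacobi.

Lemma mkLieE x y : lbr mkLie x y = (br x.1 y.1, 0).
Proof. by []. Qed.
End Builder.
End LSgen.

Section Free.
Variable F : fieldType.
Variable n : nat.

Inductive fexpr := FGen of 'I_n | FZero | FAdd of fexpr & fexpr | FOpp of fexpr
  | FScale of F & fexpr | FBr of fexpr & fexpr.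

Fixpoint fenc (e : fexpr) : GenTree.tree (F + 'I_n) :=
  match e with
  | FGen i => GenTree.Leaf (inr i)
  | FZero => GenTree.Node 0 [::]
  | FAdd a b => GenTree.Node 1 [:: fenc a; fenc b]
  | FOpp a => GenTree.Node 2 [:: fenc a]
  | FScale c a => GenTree.Node 3 [:: GenTree.Leaf (inl c); fenc a]
  | FBr a b => GenTree.Node 4 [:: fenc a; fenc b]
  end.

Fixpoint fdec (t : GenTree.tree (F + 'I_n)) : option fexpr :=
  match t with
  | GenTree.Leaf (inr i) => Some (FGen i)
  | GenTree.Node 0 [::] => Some FZero
  | GenTree.Node 1 [:: a; b] =>
      match fdec a, fdec b with Some a, Some b => Some (FAdd a b) | _, _ => None end
  | GenTree.Node 2 [:: a] =>
      match fdec a with Some a => Some (FOpp a) | _ => None end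
  | GenTree.Node 3 [:: GenTree.Leaf (inl c); a] =>
      match fdec a with Some a => Some (FScale c a) | _ => None end
  | GenTree.Node 4 [:: a; b] =>
      match fdec a, fdec b with Some a, Some b => Some (FBr a b) | _, _ => None end
  | _ => None
  end.

Lemma fencK : pcancel fenc fdec.
Proof. by elim=> //= [a -> b -> | a -> | c a -> | a -> b ->]. Qed.

HB.instance Definition _ := Choice.copy fexpr (pcan_type fencK).

Fixpoint ev (W0 W1 : lmodType F) (H : LieSuper W0 W1) (g : 'I_n -> W0)
   (e : fexpr) : W0 * W1 :=
  match e with
  | FGen i => (g i, 0)
  | FZero => 0
  | FAdd a b => ev H g a + ev H g b
  | FOpp a => - ev H g a
  | FScale c a => c *: ev H g a
  | FBr a b => lbr H (ev H g a) (ev H g b)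
  end.

Lemma ev_even (W0 W1 : lmodType F) (H : LieSuper W0 W1) g e : (ev H g e).2 = 0.
Proof.
elim: e => //= [a -> b -> | a -> | c a -> | a ha b hb];
  rewrite ?addr0 ?oppr0 ?scaler0 //.
exact: (@lbr_graded _ _ _ H false false _ _ ha hb).
Qed.

Definition fequiv (e1 e2 : fexpr) : Prop :=
  forall (W0 W1 : lmodType F) (H : LieSuper W0 W1) g, ev H g e1 = ev H g e2.

Definition canon (e : fexpr) : fexpr :=
  epsilon (inhabits FZero) (fun e' => fequiv e' e).

Lemma canon_equiv e : fequiv (canon e) e.
Proof.
rewrite /canon; apply: (epsilon_spec (inhabits FZero) (fun e' => fequiv e' e)).
by exists e.
Qed.

Lemma canon_eq e1 e2 : fequiv e1 e2 -> canon e1 = canon e2.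
Proof.
move=> h; rewrite /canon.
have -> : (fun e' => fequiv e' e1) = (fun e' => fequiv e' e2) => //.
apply: functional_extensionality => e'; apply: propositional_extensionality.
by split=> h' W0 W1 H g; rewrite h' h.
Qed.

Lemma canon_idem e : canon (canon e) == canon e.
Proof. by apply/eqP/canon_eq/canon_equiv. Qed.

Definition U0 := {e : fexpr | canon e == e}.
HB.instance Definition _ := Choice.on U0.

Definition fclass (e : fexpr) : U0 := exist _ (canon e) (canon_idem e).

Lemma evc (W0 W1 : lmodType F) (H : LieSuper W0 W1) g e :
  ev H g (val (fclass e)) = ev H g e.
Proof. exact: canon_equiv. Qed.

Lemma U0ext (u v : U0) :
  (forall (W0 W1 : lmodType F) (H : LieSuper W0 W1) g,
      ev H g (val u) = ev H g (val v)) -> u = v.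
Proof.
move=> h; apply: val_inj.
by rewrite -(eqP (valP u)) -(eqP (valP v)); apply: canon_eq.
Qed.

Lemma fclassK (u : U0) : fclass (val u) = u.
Proof. by apply: U0ext => W0 W1 H g; rewrite evc. Qed.

Definition addU (u v : U0) := fclass (FAdd (val u) (val v)).
Definition oppU (u : U0) := fclass (FOpp (val u)).
Definition zeroU := fclass FZero.
Definition scaleU (a : F) (u : U0) := fclass (FScale a (val u)).
Definition brU (u v : U0) := fclass (FBr (val u) (val v)).

Lemma addUA : associative addU.
Proof. by move=> x y z; apply: U0ext => W0 W1 H g; rewrite !evc /= !evc addrA. Qed.
Lemma addUC : commutative addU.
Proof. by move=> x y; apply: U0ext => W0 W1 H g; rewrite !evc /= addrC. Qed.
Lemma add0U : left_id zeroU addU.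
Proof. by move=> x; apply: U0ext => W0 W1 H g; rewrite !evc /= evc add0r. Qed.
Lemma addNU : left_inverse zeroU oppU addU.
Proof. by move=> x; apply: U0ext => W0 W1 H g; rewrite !evc /= evc addNr. Qed.

HB.instance Definition _ := GRing.isZmodule.Build U0 addUA addUC add0U addNU.

Lemma scaleUA a b v : scaleU a (scaleU b v) = scaleU (a * b) v.
Proof. by apply: U0ext => W0 W1 H g; rewrite !evc /= evc scalerA. Qed.
Lemma scale1U : left_id 1 scaleU.
Proof. by move=> v; apply: U0ext => W0 W1 H g; rewrite !evc /= scale1r. Qed.
Lemma scaleUDr : right_distributive scaleU +%R.
Proof. by move=> a u v; apply: U0ext => W0 W1 H g; rewrite !evc /= !evc /= scalerDr. Qed.
Lemma scaleUDl v : {morph scaleU^~ v: a b / a + b}.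
Proof. by move=> a b; apply: U0ext => W0 W1 H g; rewrite !evc /= !evc /= scalerDl. Qed.

HB.instance Definition _ := GRing.Zmodule_isLmodule.Build F U0 scaleUA scale1U scaleUDr scaleUDl.

Section EvU.
Variables (W0 W1 : lmodType F) (H : LieSuper W0 W1) (g : 'I_n -> W0).
Lemma evU_add (u v : U0) : ev H g (val (u + v)) = ev H g (val u) + ev H g (val v).
Proof. exact: evc. Qed.
Lemma evU_scale a (u : U0) : ev H g (val (a *: u)) = a *: ev H g (val u).
Proof. exact: evc. Qed.
Lemma evU_opp (u : U0) : ev H g (val (- u)) = - ev H g (val u).
Proof. exact: evc. Qed.
Lemma evU_zero : ev H g (val (0 : U0)) = 0.
Proof. exact: evc. Qed.
Lemma evU_br (u v : U0) : ev H g (val (brU u v)) = lbr H (ev H g (val u)) (ev H g (val v)).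
Proof. exact: evc. Qed.
End EvU.

Lemma brU_lin a x y z : brU (a *: x + y) z = a *: brU x z + brU y z.
Proof.
apply: U0ext => W0 W1 H g.
by rewrite !(evU_br, evU_add, evU_scale) lbrDl lbrZl.
Qed.

Lemma brU_anti x y : brU x y = - brU y x.
Proof.
apply: U0ext => W0 W1 H g.
rewrite !(evU_br, evU_opp).
by rewrite (@lbr_anti _ _ _ H false false _ _ (ev_even _ _ _) (ev_even _ _ _)) expr0 scale1r.
Qed.

Lemma brU_jac x y z : brU x (brU y z) + brU y (brU z x) + brU z (brU x y) = 0.
Proof.
apply: U0ext => W0 W1 H g.
rewrite !(evU_br, evU_add, evU_zero).
have := @lbr_jacobi _ _ _ H false false false _ _ _ (ev_even H g (val x)) (ev_even H g (val y))
   (ev_even H g (val z)).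
by rewrite !expr0 !scale1r.
Qed.

Definition Fr := mkLie brU_lin brU_anti brU_jac.
Definition fgen (i : 'I_n) : U0 := fclass (FGen i).
Definition fgen1 (v : void) : 'rV[F]_0 := match v with end.

Definition freeHom (W0 W1 : lmodType F) (H : LieSuper W0 W1) (g : 'I_n -> W0)
  (v : U0 * 'rV[F]_0) : W0 * W1 := ev H g (val v.1).

Lemma freeHom_hom (W0 W1 : lmodType F) (H : LieSuper W0 W1) g :
  even_hom Fr H (freeHom H g).
Proof.
split.
- by move=> a x y; rewrite /freeHom -[(_ + _).1]/(a *: x.1 + y.1) evU_add evU_scale.
- case=> x /= hx.
    by rewrite /freeHom hx evU_zero.
  by rewrite /freeHom ev_even.
- by move=> x y; rewrite /freeHom /= evU_br.
Qed.

Lemma freeHom_gen (W0 W1 : lmodType F) (H : LieSuper W0 W1) g i :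
  freeHom H g (fgen i, 0) = (g i, 0).
Proof. by rewrite /freeHom evc. Qed.

Lemma hom0 (V0 V1 W0 W1 : lmodType F) (L : LieSuper V0 V1) (H : LieSuper W0 W1) f :
  even_hom L H f -> f 0 = 0.
Proof.
case=> hl _ _; have := hl (-1) 0 0.
by rewrite scaler0 addr0 scaleN1r addNr.
Qed.
Lemma homD (V0 V1 W0 W1 : lmodType F) (L : LieSuper V0 V1) (H : LieSuper W0 W1) f :
  even_hom L H f -> forall x y, f (x + y) = f x + f y.
Proof. by case=> hl _ _ x y; have := hl 1 x y; rewrite !scale1r. Qed.
Lemma homZ (V0 V1 W0 W1 : lmodType F) (L : LieSuper V0 V1) (H : LieSuper W0 W1) f :
  even_hom L H f -> forall a x, f (a *: x) = a *: f x.
Proof.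
move=> hf a x; have := (let: And3 hl _ _ := hf in hl) a x 0.
by rewrite addr0 (hom0 hf) addr0.
Qed.
Lemma homN (V0 V1 W0 W1 : lmodType F) (L : LieSuper V0 V1) (H : LieSuper W0 W1) f :
  even_hom L H f -> forall x, f (- x) = - f x.
Proof. by move=> hf x; rewrite -scaleN1r (homZ hf) scaleN1r. Qed.
Lemma homB (V0 V1 W0 W1 : lmodType F) (L : LieSuper V0 V1) (H : LieSuper W0 W1) f :
  even_hom L H f -> forall x y, f (x - y) = f x - f y.
Proof. by move=> hf x y; rewrite (homD hf) (homN hf). Qed.
Lemma hom_sum (V0 V1 W0 W1 : lmodType F) (L : LieSuper V0 V1) (H : LieSuper W0 W1) f
   (I : Type) (r : seq I) (P : pred I) (h : I -> V0 * V1) :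
  even_hom L H f -> f (\sum_(i <- r | P i) h i) = \sum_(i <- r | P i) f (h i).
Proof. by move=> hf; apply: (big_morph f (homD hf) (hom0 hf)). Qed.
Lemma hom_br (V0 V1 W0 W1 : lmodType F) (L : LieSuper V0 V1) (H : LieSuper W0 W1) f :
  even_hom L H f -> forall x y, f (lbr L x y) = lbr H (f x) (f y).
Proof. by case. Qed.

Lemma fclass_add e1 e2 : fclass (FAdd e1 e2) = fclass e1 + fclass e2.
Proof. by apply: U0ext => W0 W1 H g; rewrite evU_add !evc. Qed.
Lemma fclass_opp e : fclass (FOpp e) = - fclass e.
Proof. by apply: U0ext => W0 W1 H g; rewrite evU_opp !evc. Qed.
Lemma fclass_scale a e : fclass (FScale a e) = a *: fclass e.
Proof. by apply: U0ext => W0 W1 H g; rewrite evU_scale !evc. Qed.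
Lemma fclass_br e1 e2 : fclass (FBr e1 e2) = brU (fclass e1) (fclass e2).
Proof. by apply: U0ext => W0 W1 H g; rewrite evU_br !evc. Qed.
Lemma fclass_zero : fclass FZero = 0.
Proof. by []. Qed.

Lemma U0_ind (P : U0 -> Prop) :
  (forall i, P (fgen i)) -> P 0 -> (forall u v, P u -> P v -> P (u + v)) ->
  (forall u, P u -> P (- u)) -> (forall a u, P u -> P (a *: u)) ->
  (forall u v, P u -> P v -> P (brU u v)) -> forall u, P u.
Proof.
move=> hg h0 hD hN hZ hB u; rewrite -(fclassK u).
elim: (val u) => [i | | a ha b hb | a ha | c a ha | a ha b hb].
- exact: hg.
- exact: h0.
- by rewrite fclass_add; apply: hD.
- by rewrite fclass_opp; apply: hN.
- by rewrite fclass_scale; apply: hZ.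
- by rewrite fclass_br; apply: hB.
Qed.

Lemma Fr_free : is_free Fr fgen fgen1.
Proof.
move=> W0 W1 H g0 g1; split.
  exists (freeHom H g0); split; first exact: freeHom_hom.
    by move=> x; rewrite freeHom_gen.
  by case.
move=> f f' hf hf' hg _ v.
have key : forall u : U0, f (u, 0) = f' (u, 0).
  apply: U0_ind => //.
  - by rewrite (hom0 hf) (hom0 hf').
  - move=> u v1 hu hv.
    have -> : ((u + v1, 0) : U0 * 'rV[F]_0) = (u, 0) + (v1, 0) by apply: pairP => //=; rewrite ?addr0 ?oppr0 ?scaler0.
    by rewrite (homD hf) (homD hf') hu hv.
  - move=> u hu.
    have -> : ((- u, 0) : U0 * 'rV[F]_0) = - (u, 0) by apply: pairP => //=; rewrite ?addr0 ?oppr0 ?scaler0.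
    by rewrite (homN hf) (homN hf') hu.
  - move=> a u hu.
    have -> : ((a *: u, 0) : U0 * 'rV[F]_0) = a *: (u, 0) by apply: pairP => //=; rewrite ?addr0 ?oppr0 ?scaler0.
    by rewrite (homZ hf) (homZ hf') hu.
  - move=> u v1 hu hv.
    have -> : ((brU u v1, 0) : U0 * 'rV[F]_0) = lbr Fr (u, 0) (v1, 0) by [].
    by rewrite (hom_br hf) (hom_br hf') hu hv.
case: v => u w; rewrite (rV0 w); exact: key.
Qed.

End Free.


Section Conc.
Variable F : fieldType.
Variable k : nat.
Local Notation N := k.+2.
Local Notation M := k.+3.

Definition i0 : 'I_N := ord0.
Definition i1 : 'I_N := @Ordinal N 1 (erefl true).
Definition wd (i : 'I_N) : 'I_M := widen_ord (leqnSn _) i.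
Definition zmax : 'I_M := ord_max.

Lemma i10 : (i1 == i0) = false. Proof. by []. Qed.
Lemma i01 : (i0 == i1) = false. Proof. by []. Qed.
Lemma wd_max i : (wd i == zmax) = false.
Proof. by apply/negbTE; rewrite -val_eqE /= neq_ltn ltn_ord. Qed.
Lemma inord_wd i : inord (wd i) = i :> 'I_N.
Proof. by apply: val_inj; rewrite /= inordK. Qed.

Definition dz : 'rV[F]_M := delta_mx 0 zmax.
Lemma dz_wd i : dz 0 (wd i) = 0.
Proof. by rewrite /dz mxE wd_max andbF. Qed.
Lemma dz_max : dz 0 zmax = 1.
Proof. by rewrite /dz mxE !eqxx. Qed.

Definition Dl (u v : 'rV[F]_M) : F :=
  u 0 (wd i0) * v 0 (wd i1) - u 0 (wd i1) * v 0 (wd i0).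
Definition brL (u v : 'rV[F]_M) : 'rV[F]_M := Dl u v *: dz.

Lemma brL_lin a x y z : brL (a *: x + y) z = a *: brL x z + brL y z.
Proof.
rewrite /brL /Dl scalerA -scalerDl; congr (_ *: _); rewrite !mxE; ring.
Qed.
Lemma brL_anti x y : brL x y = - brL y x.
Proof. by rewrite /brL /Dl -scaleNr; congr (_ *: _); ring. Qed.
Lemma brL_dz x c : brL x (c *: dz) = 0.
Proof. by rewrite /brL /Dl !mxE !wd_max !andbF !mulr0 subrr scale0r. Qed.
Lemma brL_jac x y z : brL x (brL y z) + brL y (brL z x) + brL z (brL x y) = 0.
Proof. by rewrite [brL y z]/brL [brL z x]/brL [brL x y]/brL !brL_dz !addr0. Qed.

Definition LL : LieSuper 'rV[F]_M 'rV[F]_0 := mkLie brL_lin brL_anti brL_jac.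

Lemma LL_nil : nilpotent LL.
Proof.
exists 2 => x /= [m [a [b [hab ->]]]].
apply: big1 => i _.
have [ha _] := hab i.
have : exists c, a i = (c *: dz, 0).
  move: ha => [m' [a' [b' [_ ->]]]].
  apply: (big_ind (fun y => exists c, y = (c *: dz, 0))).
  - by exists 0; apply: pairP; rewrite /= ?scale0r.
  - move=> y1 y2 [c1 ->] [c2 ->]; exists (c1 + c2).
    by apply: pairP; rewrite /= ?scalerDl ?addr0.
  - by move=> j _; exists (Dl (a' j).1 (b' j).1).
case=> c ->; apply: pairP => //=.
rewrite -[c *: dz]/(c *: dz) brL_anti.
by rewrite /brL /Dl !mxE !wd_max !andbF !mulr0 subrr scale0r oppr0.
Qed.

Definition KV := (('rV[F]_N * 'M[F]_N) * 'rV[F]_N)%type.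
Definition wedge (x x' : 'rV[F]_N) : 'M[F]_N :=
  \matrix_(i, j) (x 0 i * x' 0 j - x' 0 i * x 0 j).
Definition rho (x : 'rV[F]_N) (y : 'M[F]_N) : 'rV[F]_N :=
  \row_l (y i0 i1 * (x 0 i0 * (l == i0)%:R + x 0 i1 * (l == i1)%:R)).
Definition brK (a b : KV) : KV :=
  ((0, wedge a.1.1 b.1.1), rho a.1.1 b.1.2 - rho b.1.1 a.1.2).

Lemma brK_lin c x y z : brK (c *: x + y) z = c *: brK x z + brK y z.
Proof.
apply: pairP; first apply: pairP.
- by rewrite /= scaler0 addr0.
- by apply/matrixP => i j; rewrite /= !mxE; ring.
- by apply/rowP => l; rewrite /= !mxE; ring.
Qed.
Lemma brK_anti x y : brK x y = - brK y x.
Proof.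
apply: pairP; first apply: pairP.
- by rewrite /= oppr0.
- by apply/matrixP => i j; rewrite /= !mxE; ring.
- by apply/rowP => l; rewrite /= !mxE; ring.
Qed.
Lemma brK_jac x y z : brK x (brK y z) + brK y (brK z x) + brK z (brK x y) = 0.
Proof.
apply: pairP; first apply: pairP.
- by rewrite /= !addr0.
- by apply/matrixP => i j; rewrite /= !mxE; ring.
- by apply/rowP => l; rewrite /= !mxE; ring.
Qed.

Definition KK : LieSuper KV 'rV[F]_0 := mkLie brK_lin brK_anti brK_jac.

Definition pK (a : KV) : 'rV[F]_M :=
  \row_j (if j == zmax then a.1.2 i0 i1 else a.1.1 0 (inord j)).
Definition phiK (v : KV * 'rV[F]_0) : 'rV[F]_M * 'rV[F]_0 := (pK v.1, 0).

Lemma pK_wd a i : pK a 0 (wd i) = a.1.1 0 i.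
Proof. by rewrite /pK mxE wd_max inord_wd. Qed.
Lemma pK_max a : pK a 0 zmax = a.1.2 i0 i1.
Proof. by rewrite /pK mxE eqxx. Qed.

Lemma phiK_hom : even_hom KK LL phiK.
Proof.
split.
- move=> a x y; apply: pairP; rewrite /= ?scaler0 ?addr0 //.
  by apply/rowP => j; rewrite !mxE; case: ifP.
- case=> x /= hx //; rewrite hx; apply/rowP => j; rewrite !mxE.
  by case: ifP.
- move=> x y; apply: pairP => //=.
  apply/rowP => j; rewrite /brL /Dl !pK_wd /dz !mxE /=.
  by case: ifP => hj; rewrite /= ?mulr0 ?mulr1 //; ring.
Qed.

Lemma phiK_surj v : exists w, phiK w = v.
Proof.
case: v => u w; rewrite (rV0 w).
exists (((\row_i u 0 (wd i), \matrix_(i, j) (if (i == i0) && (j == i1) then u 0 zmax else 0)), 0), 0).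
apply: pairP => //=; apply/rowP => j; rewrite /pK !mxE /=.
case: ifP => hj; first by rewrite (eqP hj).
congr (u 0 _); apply: val_inj; rewrite /= inordK //.
have := ltn_ord j; rewrite ltnS leq_eqVlt; case/orP => // /eqP hj'.
by move: hj; rewrite -val_eqE /= hj' eqxx.
Qed.

Definition oth (i : 'I_N) : 'I_N := if i == i0 then i1 else i0.
Lemma oth_neq i : (i == oth i) = false.
Proof. by rewrite /oth; case: ifP => // /eqP ->. Qed.

Lemma phiK_center z : phiK z = 0 <-> center KK z.
Proof.
split.
- move=> /(congr1 fst) /= hp.
  have h1 : z.1.1.1 = 0.
    apply/rowP => i; rewrite mxE -pK_wd hp mxE //.
  have h2 : z.1.1.2 i0 i1 = 0 by rewrite -pK_max hp mxE.
  move=> h; apply: pairP => //=; apply: pairP; first apply: pairP.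
  + by [].
  + by apply/matrixP => i j; rewrite /= h1 !mxE; ring.
  + by apply/rowP => l; rewrite /= h1 !mxE h2; ring.
- move=> hc.
  have hw : forall j, brK z.1 ((delta_mx 0 j, 0), 0) = 0.
    by move=> j; have := hc (((delta_mx 0 j, 0), 0), 0) => /(congr1 fst).
  have h1 : forall i, z.1.1.1 0 i = 0.
    move=> i; have := congr1 (fun v : KV => v.1.2 i (oth i)) (hw (oth i)).
    by rewrite /= !mxE !eqxx oth_neq /= mul0r subr0 mulr1.
  have h2 : z.1.1.2 i0 i1 = 0.
    have := congr1 (fun v : KV => v.2 0 i0) (hw i0).
    rewrite /= !mxE !eqxx i10 i01 /= !h1 !(mul0r, mulr0, mul1r, mulr1, addr0, sub0r).
    by move/eqP; rewrite oppr_eq0 => /eqP.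
  rewrite /phiK; apply: pairP => //=; apply/rowP => j; rewrite /pK !mxE.
  by case: ifP.
Qed.

Lemma LL_capable : capable LL.
Proof.
exists KV, 'rV[F]_0, KK, phiK; split.
- exact: phiK_hom.
- exact: phiK_surj.
- exact: phiK_center.
Qed.

End Conc.

Section BS.
Variable F : fieldType.
Variables (V0 V1 : lmodType F) (H : LieSuper V0 V1) (P Q : V0 * V1 -> Prop).

Lemma bs0 : brspan H P Q 0.
Proof. by exists 0, (fun _ => 0), (fun _ => 0); split; [case | rewrite big_ord0]. Qed.

Lemma bs1 a b : P a -> Q b -> brspan H P Q (lbr H a b).
Proof.
move=> ha hb; exists 1, (fun _ => a), (fun _ => b); split=> //.
by rewrite big_ord1.
Qed.

Lemma bsD x y : brspan H P Q x -> brspan H P Q y -> brspan H P Q (x + y).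
Proof.
move=> [m1 [a1 [b1 [h1 ->]]]] [m2 [a2 [b2 [h2 ->]]]].
exists (m1 + m2), (fun i => match split i with inl j => a1 j | inr j => a2 j end),
  (fun i => match split i with inl j => b1 j | inr j => b2 j end); split.
  by move=> i; case: (split i).
rewrite big_split_ord; congr (_ + _); apply: eq_bigr => i _.
  by rewrite -[lshift _ _]/(unsplit (inl i)) unsplitK.
by rewrite -[rshift _ _]/(unsplit (inr i)) unsplitK.
Qed.

Lemma bsZ c x : (forall a y, P y -> P (a *: y)) ->
  brspan H P Q x -> brspan H P Q (c *: x).
Proof.
move=> hP [m [a [b [hab ->]]]].
exists m, (fun i => c *: a i), b; split.
  by move=> i; have [? ?] := hab i; split=> //; apply: hP.
rewrite scaler_sumr; apply: eq_bigr => i _; by rewrite lbrZl.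
Qed.

Lemma bs_sum (I : Type) (r : seq I) (pp : pred I) (f : I -> V0 * V1) :
  (forall i, pp i -> brspan H P Q (f i)) -> brspan H P Q (\sum_(i <- r | pp i) f i).
Proof. by move=> h; apply: big_ind => //; [exact: bs0 | exact: bsD]. Qed.

End BS.

Section Span.
Variable F : fieldType.
Variables (V : lmodType F) (T : finType) (s : T -> V).
Definition inspan (x : V) := exists c : T -> F, x = \sum_t c t *: s t.
Lemma span0 : inspan 0.
Proof. by exists (fun _ => 0); rewrite big1 // => t _; rewrite scale0r. Qed.
Lemma spanD x y : inspan x -> inspan y -> inspan (x + y).
Proof.
move=> [c1 ->] [c2 ->]; exists (fun t => c1 t + c2 t).
by rewrite -big_split; apply: eq_bigr => t _; rewrite scalerDl.
Qed.
Lemma spanZ a x : inspan x -> inspan (a *: x).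
Proof.
move=> [c ->]; exists (fun t => a * c t).
by rewrite scaler_sumr; apply: eq_bigr => t _; rewrite scalerA.
Qed.
Lemma spans t : inspan (s t).
Proof.
exists (fun t' => (t' == t)%:R); rewrite (bigD1 t) //= eqxx scale1r big1 ?addr0 //.
by move=> t' /negbTE ->; rewrite scale0r.
Qed.
End Span.

Lemma qdim_fin (F : fieldType) (V : lmodType F) (A B : V -> Prop) (T : finType)
  (s : T -> V) :
  (forall t, A (s t)) ->
  (forall a, A a -> exists c : T -> F, B (a - \sum_t c t *: s t)) ->
  (forall c : T -> F, B (\sum_t c t *: s t) -> forall t, c t = 0) ->
  qdim A B #|T|.
Proof.
move=> hA hsp hind.
have re : forall c : T -> F, \sum_t c t *: s t
    = \sum_(i < #|T|) c (enum_val i) *: s (enum_val i).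
  move=> c; rewrite -(big_enum_val (fun t => c t *: s t)).
  by apply: eq_bigl => t; rewrite inE.
exists (fun i => s (enum_val i)); split.
- by move=> i; apply: hA.
- move=> a /hsp [c hc]; exists (fun i => c (enum_val i)); by rewrite -re.
- move=> c hc i.
  have hc' : B (\sum_t c (enum_rank t) *: s t).
    rewrite re; under eq_bigr => j _ do rewrite enum_valK; exact: hc.
  by have := hind _ hc' (enum_val i); rewrite enum_valK.
Qed.

Section Schur.
Variable F : fieldType.
Variable k : nat.
Hypothesis h2 : (2 \notin [pchar F])%N.
Local Notation N := k.+2.
Local Notation M := k.+3.

Definition VV := (U0 F N * 'rV[F]_0)%type.
Local Notation FF := (Fr F N).
Local Notation br := (lbr FF).
Definition gg (i : 'I_N) : VV := (fgen F i, 0).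
Definition gL (i : 'I_N) : 'rV[F]_M := delta_mx 0 (wd i).
Definition pi : VV -> 'rV[F]_M * 'rV[F]_0 := freeHom (LL F k) gL.
Definition gK (i : 'I_N) : KV F k := ((delta_mx 0 i, 0), 0).
Definition fK : VV -> KV F k * 'rV[F]_0 := freeHom (KK F k) gK.
Definition RR (u : VV) := pi u = 0.
Definition BB := brspan FF RR (fun _ => True).
Definition Fp := brspan FF (fun _ => True) (fun _ => True).
Definition zz := br (gg (i0 k)) (gg (i1 k)).

Lemma pi_hom : even_hom FF (LL F k) pi.
Proof. exact: freeHom_hom. Qed.
Lemma fK_hom : even_hom FF (KK F k) fK.
Proof. exact: freeHom_hom. Qed.
Lemma pi_g i : pi (gg i) = (gL i, 0).
Proof. exact: freeHom_gen. Qed.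
Lemma fK_g i : fK (gg i) = (gK i, 0).
Proof. exact: freeHom_gen. Qed.

Lemma br_anti (x y : VV) : br x y = - br y x.
Proof.
have := @lbr_anti _ _ _ FF false false x y (rV0 _) (rV0 _).
by rewrite expr0 scale1r.
Qed.
Lemma br_jac (x y w : VV) : br x (br y w) + br y (br w x) + br w (br x y) = 0.
Proof.
have := @lbr_jacobi _ _ _ FF false false false x y w (rV0 _) (rV0 _) (rV0 _).
by rewrite !expr0 !scale1r.
Qed.

Lemma two_neq0 : (2%:R : F) != 0.
Proof.
by apply/negP => h; move: h2; rewrite inE /= h.
Qed.

Lemma selfneg0 (W : lmodType F) (x : W) : x = - x -> x = 0.
Proof.
move=> h; have : (2%:R : F) *: x = 0.
  by rewrite scaler_nat mulr2n {2}h addrN.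
by move/eqP; rewrite scaler_eq0 (negbTE two_neq0) /= => /eqP.
Qed.

Lemma br_self x : br x x = 0.
Proof. by apply: selfneg0; rewrite {1}br_anti. Qed.

Lemma R0 : RR 0.
Proof. exact: (hom0 pi_hom). Qed.
Lemma RD x y : RR x -> RR y -> RR (x + y).
Proof. by rewrite /RR (homD pi_hom) => -> ->; rewrite addr0. Qed.
Lemma RZ a x : RR x -> RR (a *: x).
Proof. by rewrite /RR (homZ pi_hom) => ->; rewrite scaler0. Qed.
Lemma RN x : RR x -> RR (- x).
Proof. by rewrite -scaleN1r; apply: RZ. Qed.

Lemma B0 : BB 0. Proof. exact: bs0. Qed.
Lemma BD x y : BB x -> BB y -> BB (x + y). Proof. exact: bsD. Qed.
Lemma BZ a x : BB x -> BB (a *: x). Proof. by apply: bsZ => a' y; apply: RZ. Qed.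
Lemma BN x : BB x -> BB (- x). Proof. by rewrite -scaleN1r; apply: BZ. Qed.
Lemma BB_br r u : RR r -> BB (br r u). Proof. by move=> h; apply: bs1. Qed.
Lemma BB_br' r u : RR r -> BB (br u r).
Proof. by move=> h; rewrite br_anti; apply/BN/BB_br. Qed.

Lemma pi_B b : BB b -> pi b = 0.
Proof.
move=> [m [a [c [h ->]]]]; rewrite (hom_sum _ _ _ pi_hom).
apply: big1 => i _; rewrite (hom_br pi_hom); have [-> _] := h i.
exact: lbr0l.
Qed.

Lemma Fp0 : Fp 0. Proof. exact: bs0. Qed.
Lemma FpD x y : Fp x -> Fp y -> Fp (x + y). Proof. exact: bsD. Qed.
Lemma FpZ a x : Fp x -> Fp (a *: x). Proof. by apply: bsZ. Qed.

Lemma gen (x : VV) : exists c : 'I_N -> F, exists b, Fp b /\ x = \sum_i c i *: gg i + b.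
Proof.
case: x => u w; rewrite (rV0 w).
pose P (u : U0 F N) := exists c : 'I_N -> F, exists b, Fp b /\ (u, 0) = \sum_i c i *: gg i + b.
have sum_fst : forall c : 'I_N -> F, (\sum_i c i *: gg i).2 = 0.
  by move=> c; apply: rV0.
suff : P u by [].
apply: U0_ind.
- move=> i; exists (fun j => (j == i)%:R), 0; split; first exact: Fp0.
  rewrite addr0 (bigD1 i) //= eqxx scale1r big1 ?addr0 //.
  by move=> j /negbTE ->; rewrite scale0r.
- exists (fun _ => 0), 0; split; first exact: Fp0.
  by rewrite big1 ?addr0 // => i _; rewrite scale0r.
- move=> u1 u2 [c1 [b1 [hb1 e1]]] [c2 [b2 [hb2 e2]]].
  exists (fun i => c1 i + c2 i), (b1 + b2); split; first exact: FpD.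
  have -> : ((u1 + u2, 0) : VV) = (u1, 0) + (u2, 0) by apply: pairP => //=; rewrite addr0.
  rewrite e1 e2 addrACA; congr (_ + _).
  by rewrite -big_split; apply: eq_bigr => i _; rewrite scalerDl.
- move=> u1 [c1 [b1 [hb1 e1]]].
  exists (fun i => - c1 i), (- b1); split; first by rewrite -scaleN1r; exact: FpZ.
  have -> : ((- u1, 0) : VV) = - (u1, 0) by apply: pairP => //=; rewrite oppr0.
  rewrite e1 opprD; congr (_ + _).
  by rewrite -sumrN; apply: eq_bigr => i _; rewrite scaleNr.
- move=> a u1 [c1 [b1 [hb1 e1]]].
  exists (fun i => a * c1 i), (a *: b1); split; first exact: FpZ.
  have -> : ((a *: u1, 0) : VV) = a *: (u1, 0) by apply: pairP => //=; rewrite scaler0.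
  rewrite e1 scalerDr; congr (_ + _).
  by rewrite scaler_sumr; apply: eq_bigr => i _; rewrite scalerA.
- move=> u1 u2 _ _.
  exists (fun _ => 0), (br (u1, 0) (u2, 0)); split; first by apply: bs1.
  by rewrite big1 ?add0r // => i _; rewrite scale0r.
Qed.

Lemma LLform (y : 'rV[F]_M * 'rV[F]_0) :
  brspan (LL F k) (fun _ => True) (fun _ => True) y -> exists c, y = (c *: dz F k, 0).
Proof.
move=> [m' [a' [b' [_ ->]]]].
apply: (big_ind (fun y => exists c, y = (c *: dz F k, 0))).
- by exists 0; apply: pairP; rewrite /= ?scale0r.
- move=> y1 y2 [c1 ->] [c2 ->]; exists (c1 + c2).
  by apply: pairP; rewrite /= ?scalerDl ?addr0.
- by move=> j _; exists (Dl (a' j).1 (b' j).1).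
Qed.

Lemma pi_Fp w : Fp w -> exists c, pi w = (c *: dz F k, 0).
Proof.
move=> [m [a [b [_ ->]]]]; apply: LLform.
rewrite (hom_sum _ _ _ pi_hom); apply: bs_sum => i _.
by rewrite (hom_br pi_hom); apply: bs1.
Qed.

Lemma pi_zz : pi zz = (dz F k, 0).
Proof.
rewrite /zz (hom_br pi_hom) !pi_g; apply: pairP => //=.
rewrite /brL /Dl /gL !mxE /=.
by rewrite mulr1 mulr0 subr0 scale1r.
Qed.

Lemma lemA w : Fp w -> exists b, RR (w - b *: zz).
Proof.
move=> /pi_Fp [c hc]; exists c.
rewrite /RR (homB pi_hom) (homZ pi_hom) hc pi_zz.
by apply: pairP; rewrite /= ?scaler0 subrr.
Qed.


Local Notation j0 := (i0 k).
Local Notation j1 := (i1 k).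

Definition TT := option {q : 'I_N * 'I_N | (q.1 < q.2)%N}.
Definition q01 : {q : 'I_N * 'I_N | (q.1 < q.2)%N} := exist _ (j0, j1) (erefl true).

Definition ss (t : TT) : VV :=
  match t with
  | Some q => if val q == (j0, j1) then br (gg j0) zz
              else br (gg (val q).1) (gg (val q).2)
  | None => br (gg j1) zz
  end.

Lemma wd_eq (a b : 'I_N) : (wd a == wd b) = (a == b).
Proof. by rewrite -val_eqE [RHS]eq_sym -val_eqE /= eq_sym. Qed.

Lemma Dl_gL a b : Dl (gL a) (gL b)
  = (a == j0)%:R * (b == j1)%:R - (a == j1)%:R * (b == j0)%:R.
Proof. by rewrite /Dl /gL !mxE /= !wd_eq ![_ == a]eq_sym ![_ == b]eq_sym. Qed.

Lemma R_gg a b : ~~ ((a == j0) && (b == j1)) -> ~~ ((a == j1) && (b == j0)) ->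
  RR (br (gg a) (gg b)).
Proof.
move=> ha hb; rewrite /RR (hom_br pi_hom) !pi_g; apply: pairP => //=.
rewrite /brL Dl_gL.
by case: (a == j0) (b == j1) (a == j1) (b == j0) ha hb => [] [] [] [] //= _ _;
  rewrite ?mulr0 ?mul0r ?subrr ?scale0r.
Qed.

Lemma R_gzz a : RR (br (gg a) zz).
Proof.
rewrite /RR (hom_br pi_hom) pi_g pi_zz; apply: pairP => //=.
by rewrite -[dz F k]scale1r brL_dz.
Qed.

Lemma A_s t : RR (ss t) /\ Fp (ss t).
Proof.
split; last by case: t => [q|] /=; [case: ifP => _|]; apply: bs1.
case: t => [[[a b] hab]|] /=; last exact: R_gzz.
case: ifP => [_|hne]; first exact: R_gzz.
apply: R_gg.
  by apply/negP => /andP [/eqP ha /eqP hb]; move: hne; rewrite ha hb eqxx.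
by apply/negP => /andP [/eqP ha /eqP hb]; move: hab; rewrite ha hb.
Qed.

Definition PP (x : VV) := exists y, inspan ss y /\ BB (x - y).
Definition QQ (x : VV) := exists b, PP (x - b *: zz).

Lemma PP0 : PP 0.
Proof. by exists 0; split; [exact: span0 | rewrite subrr; exact: B0]. Qed.
Lemma PPD x y : PP x -> PP y -> PP (x + y).
Proof.
move=> [y1 [e1 b1]] [y2 [e2 b2]]; exists (y1 + y2); split; first exact: spanD.
by rewrite opprD addrACA; apply: BD.
Qed.
Lemma PPZ a x : PP x -> PP (a *: x).
Proof.
move=> [y [h b]]; exists (a *: y); split; first exact: spanZ.
by rewrite -scalerBr; apply: BZ.
Qed.
Lemma PPN x : PP x -> PP (- x).
Proof. by rewrite -scaleN1r; apply: PPZ. Qed.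
Lemma PP_B x : BB x -> PP x.
Proof. by exists 0; split; [exact: span0 | rewrite subr0]. Qed.
Lemma PP_s t : PP (ss t).
Proof. by exists (ss t); split; [exact: spans | rewrite subrr; exact: B0]. Qed.
Lemma PP_sum (I : Type) (r : seq I) (f : I -> VV) :
  (forall i, PP (f i)) -> PP (\sum_(i <- r) f i).
Proof. by move=> h; apply: big_ind => //; [exact: PP0 | exact: PPD]. Qed.

Lemma QQ0 : QQ 0.
Proof. by exists 0; rewrite scale0r subr0; exact: PP0. Qed.
Lemma QQD x y : QQ x -> QQ y -> QQ (x + y).
Proof.
move=> [b1 e1] [b2 e2]; exists (b1 + b2).
by rewrite scalerDl opprD addrACA; apply: PPD.
Qed.
Lemma QQZ a x : QQ x -> QQ (a *: x).
Proof.
move=> [b h]; exists (a * b).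
by rewrite -scalerA -scalerBr; apply: PPZ.
Qed.
Lemma QQN x : QQ x -> QQ (- x).
Proof. by rewrite -scaleN1r; apply: QQZ. Qed.
Lemma QQ_P x : PP x -> QQ x.
Proof. by exists 0; rewrite scale0r subr0. Qed.
Lemma QQ_z : QQ zz.
Proof. by exists 1; rewrite scale1r subrr; exact: PP0. Qed.
Lemma QQ_sum (I : Type) (r : seq I) (f : I -> VV) :
  (forall i, QQ (f i)) -> QQ (\sum_(i <- r) f i).
Proof. by move=> h; apply: big_ind => //; [exact: QQ0 | exact: QQD]. Qed.

Lemma i10' : (j1 == j0) = false. Proof. by []. Qed.
Lemma i01' : (j0 == j1) = false. Proof. by []. Qed.

Lemma C0 j : PP (br zz (gg j)).
Proof.
rewrite br_anti; apply: PPN.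
case: (eqVneq j j0) => [->|hj0].
  by have := PP_s (Some q01).
case: (eqVneq j j1) => [->|hj1].
  exact: (PP_s None).
apply: PP_B.
have e := br_jac (gg j0) (gg j1) (gg j).
have -> : br (gg j) zz = - (br (gg j0) (br (gg j1) (gg j)) + br (gg j1) (br (gg j) (gg j0))).
  by apply/eqP; rewrite -addr_eq0 addrC e.
apply/BN/BD; apply: BB_br'; apply: R_gg; rewrite ?eqxx ?i10' ?i01' //=.
all: by rewrite ?andbF ?andbT.
Qed.

Lemma Pzv v : PP (br zz v).
Proof.
have [c [b [hb ->]]] := gen v.
rewrite lbrDr lbr_sumr; apply: PPD.
  by apply: PP_sum => i; rewrite lbrZr; apply/PPZ/C0.
have [be hbe] := lemA hb.
rewrite -[b](subrK (be *: zz)) lbrDr lbrZr br_self scaler0 addr0.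
by apply/PP_B/BB_br'.
Qed.

Lemma C1 u v : Fp u -> PP (br u v).
Proof.
move=> /lemA [be hbe].
rewrite -[u](subrK (be *: zz)) lbrDl lbrZl.
by apply: PPD; [apply/PP_B/BB_br | apply/PPZ/Pzv].
Qed.

Lemma C2 i j : QQ (br (gg i) (gg j)).
Proof.
case: (ltngtP i j) => hij.
- have := PP_s (Some (exist _ (i, j) hij)); rewrite /=.
  case: ifP => [/eqP [-> ->] _ | _]; first exact: QQ_z.
  exact: QQ_P.
- rewrite br_anti; apply: QQN.
  have := PP_s (Some (exist _ (j, i) hij)); rewrite /=.
  case: ifP => [/eqP [-> ->] _ | _]; first exact: QQ_z.
  exact: QQ_P.
- by rewrite (val_inj hij) br_self; exact: QQ0.
Qed.

Lemma Q_br a b : QQ (br a b).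
Proof.
have [c [a' [ha' ->]]] := gen a; have [d [b' [hb' ->]]] := gen b.
rewrite lbrDl !lbrDr; apply: QQD; apply: QQD.
- rewrite lbr_suml; apply: QQ_sum => i; rewrite lbrZl; apply: QQZ.
  rewrite lbr_sumr; apply: QQ_sum => j; rewrite lbrZr; apply: QQZ; exact: C2.
- by rewrite br_anti; apply/QQN/QQ_P/C1.
- by apply/QQ_P/C1.
- by apply/QQ_P/C1.
Qed.

Lemma pi_span y : inspan ss y -> pi y = 0.
Proof.
move=> [c ->]; rewrite (hom_sum _ _ _ pi_hom); apply: big1 => t _.
by rewrite (homZ pi_hom); have [-> _] := A_s t; rewrite scaler0.
Qed.

Lemma spanning x : RR x -> Fp x -> PP x.
Proof.
move=> hx hF.
have [be [y [hy hb]]] : QQ x.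
  move: hF => [m [a [b [_ ->]]]]; apply: QQ_sum => i; exact: Q_br.
have hpi := pi_B hb.
rewrite !(homB pi_hom) (homZ pi_hom) hx (pi_span hy) pi_zz subr0 sub0r in hpi.
have : be = 0.
  have := congr1 (fun w : 'rV[F]_M * 'rV[F]_0 => w.1 0 (zmax k)) hpi.
  by rewrite /= !mxE /= eqxx mulr1 => /eqP; rewrite oppr_eq0 => /eqP.
by move=> be0; exists y; split=> //; move: hb; rewrite be0 scale0r subr0.
Qed.

Lemma hom_ev n' (W0 W1 W0' W1' : lmodType F) (H : LieSuper W0 W1)
  (H' : LieSuper W0' W1') q g g' :
  even_hom H H' q -> (forall i, q (g i, 0) = (g' i, 0)) ->
  forall e : fexpr F n', q (ev H g e) = ev H' g' e.
Proof.
move=> hq hg; elim=> [i | | a ha b hb | a ha | c a ha | a ha b hb] /=.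
- exact: hg.
- exact: (hom0 hq).
- by rewrite (homD hq) ha hb.
- by rewrite (homN hq) ha.
- by rewrite (homZ hq) ha.
- by rewrite (hom_br hq) ha hb.
Qed.

Lemma phiK_gK i : phiK (gK i, 0) = (gL i, 0).
Proof.
apply: pairP => //=; apply/rowP => j; rewrite /pK /gL !mxE /=.
case: ifP => hj.
  by rewrite (eqP hj) eq_sym wd_max.
have hjl : (j < N)%N.
  have := ltn_ord j; rewrite ltnS leq_eqVlt; case/orP => // /eqP hj'.
  by move: hj; rewrite -val_eqE /= hj' eqxx.
have -> : (inord j == i) = (j == wd i).
  by rewrite -val_eqE -[j == wd i]val_eqE /= inordK.
by [].
Qed.

Lemma comp v : phiK (fK v) = pi v.
Proof. by rewrite /fK /pi /freeHom; apply: hom_ev; [exact: phiK_hom | exact: phiK_gK]. Qed.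

Lemma fK_B b : BB b -> fK b = 0.
Proof.
move=> [m [a [c [h ->]]]]; rewrite (hom_sum _ _ _ fK_hom).
apply: big1 => i _; rewrite (hom_br fK_hom); have [hr _] := h i.
have : phiK (fK (a i)) = 0 by rewrite comp.
by move/phiK_center; apply.
Qed.

Definition W01 := brK (gK j0) (gK j1).
Lemma fK_zz : fK zz = (W01, 0).
Proof. by rewrite /zz (hom_br fK_hom) !fK_g. Qed.

Lemma fK_ss t : fK (ss t) =
  match t with
  | Some q => if val q == (j0, j1) then (brK (gK j0) W01, 0)
              else (brK (gK (val q).1) (gK (val q).2), 0)
  | None => (brK (gK j1) W01, 0)
  end.
Proof.
by case: t => [q|] /=; [case: ifP => _|]; rewrite (hom_br fK_hom) ?fK_g ?fK_zz.
Qed.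

Arguments brK : simpl never.

Lemma E1 a b i j : (brK (gK a) (gK b)).1.2 i j
  = (i == a)%:R * (j == b)%:R - (i == b)%:R * (j == a)%:R.
Proof. by rewrite /brK /wedge /gK /= !mxE. Qed.
Lemma E2 a b l : (brK (gK a) (gK b)).2 0 l = 0.
Proof. by rewrite /brK /rho /gK /= !mxE; ring. Qed.
Lemma E3 a i j : (brK (gK a) W01).1.2 i j = 0.
Proof. by rewrite /W01 /brK /wedge /gK /= !mxE; ring. Qed.
Lemma E4 a l : (brK (gK a) W01).2 0 l
  = (a == j0)%:R * (l == j0)%:R + (a == j1)%:R * (l == j1)%:R.
Proof.
rewrite /W01 /brK /wedge /rho /gK /= !mxE /=.
rewrite ![_ == a]eq_sym; ring.
Qed.

Definition ell (t : TT) (w : KV F k * 'rV[F]_0) : F :=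
  match t with
  | Some q => if val q == (j0, j1) then w.1.2 0 j0 else w.1.1.2 (val q).1 (val q).2
  | None => w.1.2 0 j1
  end.

Lemma ell_add t a w w' : ell t (a *: w + w') = a * ell t w + ell t w'.
Proof. by case: t => [q|] /=; [case: ifP => _|]; rewrite !mxE. Qed.
Lemma ell_0 t : ell t 0 = 0.
Proof. by case: t => [q|] /=; [case: ifP => _|]; rewrite !mxE. Qed.
Lemma ell_sum t (c : TT -> F) (w : TT -> KV F k * 'rV[F]_0) :
  ell t (\sum_t' c t' *: w t') = \sum_t' c t' * ell t (w t').
Proof.
elim/big_rec2: _ => [|t' y1 y2 _ h]; first exact: ell_0.
by rewrite ell_add h.
Qed.

Lemma ell_s t t' : ell t (fK (ss t')) = (t == t')%:R.
Proof.
rewrite fK_ss.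
case: t' => [[[a' b'] hab']|] /=; last first.
  case: t => [[[a b] hab]|] /=; last by rewrite E4 i10' !eqxx /=; ring.
  by case: ifP => _; rewrite ?E4 ?E3 ?i01' ?eqxx /=; ring.
case: t => [[[a b] hab]|] /=; last first.
  by case: ifP => _; rewrite ?E4 ?E2 ?i01' ?eqxx /=; ring.
have -> : (Some (exist (fun q : 'I_N * 'I_N => (q.1 < q.2)%N) (a, b) hab) ==
    Some (exist (fun q : 'I_N * 'I_N => (q.1 < q.2)%N) (a', b') hab')) = ((a, b) == (a', b')) by [].
case: ifP => hq; case: ifP => hq'.
- by rewrite /= E4 (eqP hq) (eqP hq') !eqxx ?i01' /=; ring.
- rewrite (eqP hq) eq_sym hq' /=.
  by rewrite /brK /rho /= !mxE; ring.
- change ((brK (gK j0) W01).1.2 a b = ((a, b) == (a', b'))%:R).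
  by rewrite E3 (eqP hq') hq.
change ((brK (gK a') (gK b')).1.2 a b = ((a, b) == (a', b'))%:R).
rewrite E1.
have -> : ((a == b')%:R * (b == a')%:R : F) = 0.
  case: (eqVneq a b') => [e1|]; last by rewrite mul0r.
  case: (eqVneq b a') => [e2|]; last by rewrite mulr0.
  by move: hab hab'; rewrite e1 e2 /= => h h'; have := ltn_trans h h'; rewrite ltnn.
rewrite subr0 xpair_eqE.
by case: (a == a'); case: (b == b'); rewrite /= ?mulr1 ?mulr0 ?mul0r.
Qed.

Lemma indep (c : TT -> F) : BB (\sum_t c t *: ss t) -> forall t, c t = 0.
Proof.
move=> hb t; have := fK_B hb; rewrite (hom_sum _ _ _ fK_hom).
under eq_bigr do rewrite (homZ fK_hom).
move/(congr1 (ell t)); rewrite ell_sum ell_0 (bigD1 t) //= ell_s eqxx mulr1.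
rewrite big1 ?addr0 //.
by move=> t' hne; rewrite ell_s eq_sym (negbTE hne) mulr0.
Qed.

Lemma fst_sum (A B : zmodType) (I : Type) (r : seq I) (f : I -> A * B) :
  (\sum_(i <- r) f i).1 = \sum_(i <- r) (f i).1.
Proof. by apply: (big_morph fst) => //. Qed.

Lemma pi_surj v : exists u, pi u = v.
Proof.
case: v => u w; rewrite (rV0 w).
exists (\sum_i (u 0 (wd i)) *: gg i + (u 0 (zmax k)) *: zz).
rewrite (homD pi_hom) (hom_sum _ _ _ pi_hom) (homZ pi_hom) pi_zz.
under eq_bigr do rewrite (homZ pi_hom) pi_g.
apply: pairP; last by apply: rV0.
rewrite /= fst_sum /=; apply/rowP => j; rewrite !mxE summxE /=.
case: (eqVneq j (zmax k)) => [->|hj].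
  rewrite big1 ?add0r ?eqxx ?mulr1 // => i _.
  by rewrite /gL !mxE /= eq_sym wd_max mulr0.
have ej : j = wd (inord j).
  apply: val_inj; rewrite /= inordK //.
  have := ltn_ord j; rewrite ltnS leq_eqVlt; case/orP => // /eqP hj'.
  by move: hj; rewrite -val_eqE /= hj' eqxx.
rewrite ej mulr0 addr0 (bigD1 (inord j)) //= big1 ?addr0.
  by rewrite /gL !mxE /= eqxx mulr1.
by move=> i hi; rewrite /gL !mxE /= wd_eq eq_sym (negbTE hi) mulr0.
Qed.

Lemma schurLL : schur_dim (LL F k) #|{: TT}|.
Proof.
exists 'I_N, void, (U0 F N), 'rV[F]_0, (Fr F N), (@fgen F N), (fgen1 F), pi; split.
- exact: Fr_free.
- exact: pi_hom.
- exact: pi_surj.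
cbv zeta.
apply: (@qdim_fin _ _ _ _ _ ss).
- exact: A_s.
- move=> a [hR hF]; have [y [[c ->] hb]] := spanning hR hF.
  by exists c.
- exact: indep.
Qed.

End Schur.

Lemma sum_lt n j : (j <= n)%N -> (\sum_(i < n) (i < j : nat))%N = j.
Proof.
elim: n j => [|n IH] j hj; first by rewrite big_ord0; case: j hj.
rewrite big_ord_recr /=.
case: (ltnP j n.+1) => hjn.
  by rewrite IH // addn0.
have ej : j = n.+1 by apply/eqP; rewrite eqn_leq hj hjn.
subst j; rewrite addn1; congr (_.+1).
transitivity (\sum_(i < n) (i < n : nat))%N; last exact: IH.
by apply: eq_bigr => i _; rewrite ltn_ord ltnS ltnW.
Qed.

Lemma sum_id2 n : (2 * \sum_(j < n) (j : nat))%N = (n * n.-1)%N.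
Proof.
elim: n => [|n IH]; first by rewrite big_ord0.
rewrite big_ord_recr /= mulnDr IH.
case: n {IH} => [|n] //=; lia.
Qed.

Lemma card_pairs N : (2 * #|[pred q : 'I_N * 'I_N | (q.1 < q.2)%N]|)%N = (N * N.-1)%N.
Proof.
rewrite -sum1_card big_mkcond /=.
transitivity (2 * \sum_(i : 'I_N) \sum_(j : 'I_N) (i < j : nat))%N.
  congr (2 * _)%N; rewrite pair_bigA /=; apply: eq_bigr => q _.
  by rewrite inE; case: (q.1 < q.2)%N.
rewrite exchange_big /= -sum_id2; congr (2 * _)%N; apply: eq_bigr => j _.
exact: (sum_lt (ltnW (ltn_ord j))).
Qed.

Section Zero.
Variable F : fieldType.
Definition brZ (x y : 'rV[F]_0) : 'rV[F]_0 := 0.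
Lemma brZ_lin a x y z : brZ (a *: x + y) z = a *: brZ x z + brZ y z.
Proof. by rewrite /brZ scaler0 addr0. Qed.
Lemma brZ_anti x y : brZ x y = - brZ y x.
Proof. by rewrite /brZ oppr0. Qed.
Lemma brZ_jac x y z : brZ x (brZ y z) + brZ y (brZ z x) + brZ z (brZ x y) = 0.
Proof. by rewrite /brZ !addr0. Qed.
Definition ZZ : LieSuper 'rV[F]_0 'rV[F]_0 := mkLie brZ_lin brZ_anti brZ_jac.

Lemma ZZ0 (v : 'rV[F]_0 * 'rV[F]_0) : v = 0.
Proof. by apply: pairP; apply: rV0. Qed.

Lemma id_hom : even_hom ZZ ZZ id.
Proof. by split. Qed.

Lemma ZZ_free : is_free ZZ (fun v : void => match v with end) (fun v : void => match v with end).
Proof.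
move=> W0 W1 H g0 g1; split.
  exists (fun _ => 0); split; [split | by case | by case].
  - by move=> a x y; rewrite scaler0 addr0.
  - by case.
  - by move=> x y; rewrite lbr0l.
move=> f f' hf hf' _ _ v.
by rewrite (ZZ0 v) (hom0 hf) (hom0 hf').
Qed.

Lemma ZZ_schur : schur_dim ZZ 0.
Proof.
exists void, void, 'rV[F]_0, 'rV[F]_0, ZZ, (fun v : void => match v with end),
  (fun v : void => match v with end), id; split.
- exact: ZZ_free.
- exact: id_hom.
- by move=> v; exists v.
cbv zeta.
exists (fun _ => 0); split.
- by case.
- move=> a _; exists (fun _ => 0); rewrite (ZZ0 a) big_ord0 subr0; exact: bs0.
- by move=> c _ [].
Qed.

Lemma ZZ_corank : has_corank ZZ 0.
Proof. by exists 0%N; split; [exact: ZZ_schur |]. Qed.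

Lemma ZZ_capable : capable ZZ.
Proof.
exists 'rV[F]_0, 'rV[F]_0, ZZ, id; split.
- exact: id_hom.
- by move=> v; exists v.
- by move=> z; split=> _; [move=> h; apply: ZZ0 | apply: ZZ0].
Qed.

Lemma ZZ_nil : nilpotent ZZ.
Proof. by exists 0%N => x _; apply: ZZ0. Qed.
End Zero.

Lemma LL_corank (F : fieldType) (h2 : (2 \notin [pchar F])%N) k :
  has_corank (LL F k) k.+1.
Proof.
exists #|{: TT k}|; split; first exact: schurLL.
rewrite card_option card_sig.
have hc := card_pairs k.+2.
set c := #|_| in hc *.
rewrite /= in hc.
nia.
Qed.

Theorem mainTheorem18 (F : fieldType)
  (h2 : (2 \notin [pchar F])%N) (h3 : (3 \notin [pchar F])%N) (t : nat) :
  exists (m n : nat) (L : LieSuper 'rV[F]_m 'rV[F]_n),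
    [/\ capable L, nilpotent L & has_corank L t].
Proof.
case: t => [|k].
  by exists 0%N, 0%N, (ZZ F); split; [exact: ZZ_capable | exact: ZZ_nil | exact: ZZ_corank].
exists k.+3, 0%N, (LL F k); split; [exact: LL_capable | exact: LL_nil | exact: LL_corank].
Qed.
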